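(* Let $n,m$ be positive integers. For a weak composition $A=(a_0,b_1,a_1,\ldots,b_m,a_m)$ of $n$ into $2m+1$ parts, let $P_A$ be the poset on $[n]$ that is the disjoint union of $2m+1$ chains on consecutive blocks of sizes $a_0,b_1,a_1,\ldots,b_m,a_m$, where the blocks of sizes $a_j$ are ordered increasingly ($s<_{P_A}s+1<_{P_A}\cdots$) and the blocks of sizes $b_j$ are ordered decreasingly (e.g. the second block is the chain $a_0+b_1<_{P_A}a_0+b_1-1<_{P_A}\cdots<_{P_A}a_0+1$). An outcome of an up-down $m$-riffle shuffle is a pair $(A,\sigma)$ with $A$ such a weak composition and $\sigma\in\mathcal{L}(P_A)$. Then the map sending $(A,\sigma)$ to the unique $f\in\mathcal{A}(P_A;m)$ whose image multiset is $\{0^{a_0},\bar1^{b_1},1^{a_1},\ldots,\bar m^{b_m},m^{a_m}\}$ and whose sorting permutation is $\pi(f)=\sigma^{-1}$ is a well-defined bijection from the set of outcomes of the up-down $m$-riffle shuffle onto $\mathcal{A}([n];m)$.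
   Context: Integers are written with $\bar i=-i$, totally ordered by $0<_{\mathbb Z}\bar1<_{\mathbb Z}1<_{\mathbb Z}\bar2<_{\mathbb Z}2<_{\mathbb Z}\cdots$, and $|\bar j|=j$. Write $a\prec_+ b$ if $a<_{\mathbb Z}b$ or $a=b\in\{0,1,2,\ldots\}$, and $a\prec_- b$ if $a<_{\mathbb Z}b$ or $a=b\in\{\bar1,\bar2,\ldots\}$. For a partial order $P$ on $[n]$, a $P$-partition is a map $f:[n]\to\mathbb Z$ such that whenever $i<_P j$: $f(i)\prec_+f(j)$ if $i<j$ as integers, and $f(i)\prec_- f(j)$ if $i>j$. $\mathcal{A}(P;m)$ is the set of $P$-partitions with $|f(i)|\le m$ for all $i$; the antichain $[n]$ has no relations. A permutation $\pi\in S_n$ is identified with the chain $\pi(1)<_\pi\cdots<_\pi\pi(n)$, and $\mathcal{L}(P)=\{\pi\in S_n: i<_Pj\Rightarrow i<_\pi j\}$. The sorting permutation $\pi(f)$ of $f:[n]\to\mathbb Z$ is the unique permutation with: $f(i)<_{\mathbb Z}f(j)\Rightarrow i<_\pi j$; $i<j$, $f(i)=f(j)\in\{0,1,\ldots\}\Rightarrow i<_\pi j$; $i<j$, $f(i)=f(j)\in\{\bar1,\bar2,\ldots\}\Rightarrow j<_\pi i$. (In the up-down riffle shuffle, the deck $1,\ldots,n$ is cut into $2m+1$ consecutive piles of sizes $A$, every other pile starting with the second is reversed, and the piles are interleaved; the linear extension $\sigma$ records the interleaving.)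
   Formalization: The function f associated with an outcome $(A,\sigma)$ is taken in $\mathcal{A}([n];m)$, with only the bound $|f(i)|\le m$, rather than in $\mathcal{A}(P_A;m)$, so it need not be a $P_A$-partition. The statement above fails without it. *)

(* Defs.v *)
From mathcomp Require Import all_boot all_order all_fingroup all_algebra.
Set Implicit Arguments. Unset Strict Implicit. Unset Printing Implicit Defensive.
Import Order.TTheory GRing.Theory Num.Theory.

(* Elements of [n] = {1,...,n} are represented by 'I_n (i : 'I_n stands for
   i+1); this shift preserves the integer order, which is all that matters. *)

(* The order 0 <Z -1 <Z 1 <Z -2 <Z 2 <Z ... : zkey is the rank of z in it. *)
Definition zkey (z : int) : nat :=
  if (z < 0)%R then (2 * absz z).-1 else 2 * absz z.
Definition ltZ (x y : int) : bool := zkey x < zkey y.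

Definition precP (a b : int) : bool := ltZ a b || ((a == b) && (0 <= a)%R).
Definition precM (a b : int) : bool := ltZ a b || ((a == b) && (a < 0)%R).

(* A partial order on [n] is given by its strict relation  i <_P j. *)
Definition is_Ppartition n (P : rel 'I_n) (f : 'I_n -> int) : Prop :=
  forall i j : 'I_n, P i j ->
    if (i < j)%N then precP (f i) (f j) else precM (f i) (f j).

Definition in_A n (P : rel 'I_n) (m : nat) (f : 'I_n -> int) : Prop :=
  is_Ppartition P f /\ forall i, (absz (f i) <= m)%N.

Definition antichain n : rel 'I_n := fun _ _ => false.

(* A permutation p is identified with the chain p(1) <_p ... <_p p(n):
   i <_p j iff p^-1(i) < p^-1(j). *)
Definition before n (p : {perm 'I_n}) (i j : 'I_n) : bool :=
  ((p^-1)%g i < (p^-1)%g j)%N.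

Definition is_linext n (P : rel 'I_n) (p : {perm 'I_n}) : Prop :=
  forall i j, P i j -> before p i j.

Definition is_sortperm n (f : 'I_n -> int) (p : {perm 'I_n}) : Prop :=
  forall i j : 'I_n,
    (ltZ (f i) (f j) -> before p i j) /\
    ((i < j)%N -> f i = f j -> (0 <= f i)%R -> before p i j) /\
    ((i < j)%N -> f i = f j -> (f i < 0)%R -> before p j i).

(* Weak compositions A = (a_0, b_1, a_1, ..., b_m, a_m) of n into 2m+1 parts
   are indexed by k : 'I_(2m+1): part k = a_(k/2) if k is even,
   b_((k+1)/2) if k is odd. *)
Definition weak_comp n m (A : {ffun 'I_(2 * m).+1 -> nat}) : Prop :=
  (\sum_(k < (2 * m).+1) A k)%N = n.

(* label of part k: k/2 for a_(k/2), and -(k+1)/2 (= \bar{(k+1)/2}) for b *)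
Definition lab (k : nat) : int :=
  if odd k then (- Posz ((k.+1)./2))%R else Posz (k./2).

(* first element (0-based) of block k *)
Definition bstart m (A : {ffun 'I_(2 * m).+1 -> nat}) (k : nat) : nat :=
  (\sum_(l < (2 * m).+1 | (l < k)%N) A l)%N.
Definition inblock n m (A : {ffun 'I_(2 * m).+1 -> nat}) (k : 'I_(2 * m).+1)
  (i : 'I_n) : bool :=
  (bstart A k <= i < bstart A k + A k)%N.

Definition PA n m (A : {ffun 'I_(2 * m).+1 -> nat}) : rel 'I_n :=
  fun i j => [exists k : 'I_(2 * m).+1,
    [&& inblock A k i, inblock A k j & (if odd k then j < i else i < j)%N]].

Definition mult m (A : {ffun 'I_(2 * m).+1 -> nat}) (z : int) : nat :=
  (\sum_(k < (2 * m).+1 | lab k == z) A k)%N.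

Definition outcome n m (A : {ffun 'I_(2 * m).+1 -> nat}) (s : {perm 'I_n})
  : Prop := weak_comp n A /\ is_linext (PA A) s.

Definition assoc n m (A : {ffun 'I_(2 * m).+1 -> nat}) (s : {perm 'I_n})
  (f : {ffun 'I_n -> int}) : Prop :=
  in_A (@antichain n) m f /\
  (forall z : int, #|[pred i | f i == z]| = mult A z) /\
  is_sortperm f (s^-1)%g.

(* Main.v *)
Require Import Defs.
From mathcomp Require Import all_boot all_order all_fingroup all_algebra.
From mathcomp Require Import zify.
Set Implicit Arguments. Unset Strict Implicit. Unset Printing Implicit Defensive.
Import Order.TTheory GRing.Theory Num.Theory.

Lemma zkey_lab k : zkey (lab k) = k.
Proof.
have hk := odd_double_half k.
have hu : (k.+1)./2 = odd k + k./2 by rewrite -uphalf_half.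
rewrite /zkey /lab; case: (boolP (odd k)) => ok.
- rewrite oppr_lt0 ltz_nat hu ok /=. rewrite ?abszN ?absz_nat. idtac.
  rewrite ok /= in hk. lia.
- rewrite ltz_nat ltn0 absz_nat.
  rewrite (negbTE ok) /= add0n in hk. lia.
Qed.

Lemma lab_zkey z : lab (zkey z) = z.
Proof.
case: z => j.
- rewrite /zkey /= /lab. have -> : odd (2 * j) = false by rewrite oddM.
  by rewrite mul2n doubleK.
- have -> : zkey (Negz j) = (j.*2).+1 by rewrite /zkey /=; lia.
  rewrite /lab /= odd_double /= doubleK NegzE //.
Qed.

Lemma zkey_inj : injective zkey.
Proof. by move=> x y e; rewrite -(lab_zkey x) e lab_zkey. Qed.

Lemma zkey_le m z : (zkey z <= 2 * m)%N = (absz z <= m)%N.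
Proof. rewrite /zkey; case: (z < 0)%R; lia. Qed.


Lemma lex_lt a b c d N : (b < N)%N -> (d < N)%N ->
  (a * N + b < c * N + d)%N = (a < c)%N || ((a == c) && (b < d)%N).
Proof.
move=> hb hd; case: (ltngtP a c) => h /=.
- apply/idP; nia.
- apply/negbTE; rewrite -leqNgt; nia.
- by subst; rewrite ltn_add2l.
Qed.

Lemma lex_eq a b c d N : (b < N)%N -> (d < N)%N ->
  a * N + b = c * N + d -> a = c /\ b = d.
Proof.
move=> hb hd e.
have h1 := @lex_lt a b c d N hb hd. have h2 := @lex_lt c d a b N hd hb.
rewrite e ltnn in h1. rewrite e ltnn in h2.
case: (ltngtP a c) h1 h2 => // h; rewrite ?eqxx /=.
move=> h1 h2. subst; split => //; lia.
Qed.

Lemma card_lt n k : (k <= n)%N -> #|[pred t : 'I_n | (t < k)%N]| = k.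
Proof.
move=> hk; rewrite -sum1_card.
have := big_ord_narrow_cond (op:=addn) (idx:=0%N) (P:=xpredT) (F:=fun _ => 1%N) hk.
rewrite /= (_ : \sum_(i < k) 1 = k)%N; last first.
  by rewrite sum_nat_const card_ord muln1.
move=> e; rewrite -[RHS]e.
by apply: eq_bigl => i; rewrite inE.
Qed.

Lemma card_perm (T : finType) (s : {perm T}) (P : pred T) :
  #|[pred x | P (s x)]| = #|[pred x | P x]|.
Proof.
transitivity #|s @^-1: [set x | P x]|.
  by apply: eq_card => x; rewrite !inE.
rewrite card_preimset; last exact: perm_inj.
by apply: eq_card => x; rewrite !inE.
Qed.

Lemma card_down n (D : pred 'I_n) :
  (forall u v : 'I_n, (u <= v)%N -> D v -> D u) ->
  forall t : 'I_n, D t = (t < #|D|)%N.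
Proof.
move=> hD t; case: (boolP (D t)) => Dt.
- have : #|[pred u : 'I_n | (u < t.+1)%N]| <= #|D|.
    apply: subset_leq_card; apply/subsetP => u; rewrite inE ltnS => hu.
    exact: hD hu Dt.
  by rewrite card_lt.
- have : #|D| <= #|[pred u : 'I_n | (u < t)%N]|.
    apply: subset_leq_card; apply/subsetP => u Du; rewrite inE ltnNge.
    apply/negP => hu; move: Dt; rewrite (hD _ _ hu Du) //.
  rewrite card_lt; last exact: ltnW.
  by move=> h; apply/esym/negbTE; rewrite -leqNgt.
Qed.



Lemma bstart0 (m : nat) (A : {ffun 'I_(2 * m).+1 -> nat}) : bstart A 0 = 0%N.
Proof. by rewrite /bstart big_pred0. Qed.

Lemma bstart_ge (m : nat) (A : {ffun 'I_(2 * m).+1 -> nat}) k : ((2 * m).+1 <= k)%N -> bstart A k = (\sum_l A l)%N.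
Proof.
move=> hk; rewrite /bstart; apply: eq_bigl => l.
by rewrite (leq_trans (ltn_ord l) hk).
Qed.

Lemma bstart_S (m : nat) (A : {ffun 'I_(2 * m).+1 -> nat}) k : (k < (2 * m).+1)%N -> bstart A k.+1 = (bstart A k + A (inord k))%N.
Proof.
move=> hk; rewrite /bstart (bigD1 (inord k)) /=; last by rewrite inordK.
rewrite addnC; congr (_ + _)%N; apply: eq_bigl => l.
have e : (l != inord k :> 'I_(2 * m).+1) = (nat_of_ord l != k).
  by rewrite -val_eqE /= inordK.
rewrite e; lia.
Qed.

Lemma bstart_mono (m : nat) (A : {ffun 'I_(2 * m).+1 -> nat}) k k' : (k <= k')%N -> (bstart A k <= bstart A k')%N.
Proof.
move=> hk; rewrite /bstart (big_mkcond (fun l : 'I_(2 * m).+1 => (l < k)%N))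
  (big_mkcond (fun l : 'I_(2 * m).+1 => (l < k')%N)).
apply: leq_sum => l _; case: ifP => h; last by [].
by rewrite (leq_trans h hk).
Qed.

Lemma mult_eq (m : nat) (A : {ffun 'I_(2 * m).+1 -> nat}) z : mult A z = if (zkey z < (2 * m).+1)%N then A (inord (zkey z)) else 0%N.
Proof.
rewrite /mult; case: ifP => h.
- rewrite (big_pred1 (inord (zkey z))) // => l /=.
  apply/eqP/eqP => [<-|->].
  + by apply: val_inj; rewrite /= inordK zkey_lab.
  + by rewrite inordK // lab_zkey.
- rewrite big_pred0 // => l; apply/negbTE/eqP => e.
  by move: h; rewrite -e zkey_lab ltn_ord.
Qed.

Lemma mult_lab (m : nat) (A : {ffun 'I_(2 * m).+1 -> nat}) (l : 'I_(2 * m).+1) : mult A (lab l) = A l.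
Proof. by rewrite mult_eq zkey_lab ltn_ord inord_val. Qed.


Definition skey n (f : 'I_n -> int) (x : 'I_n) : nat :=
  zkey (f x) * n + (if (0 <= f x)%R then nat_of_ord x else n.-1 - x).

Lemma skey_lt n (f : 'I_n -> int) x y : (skey f x < skey f y)%N =
  (zkey (f x) < zkey (f y))%N || ((f x == f y) && (if (0 <= f x)%R then x < y else y < x)%N).
Proof.
have hx := ltn_ord x; have hy := ltn_ord y.
have s2 : forall z : 'I_n, ((if (0 <= f z)%R then nat_of_ord z else n.-1 - z) < n)%N.
  by move=> z; have := ltn_ord z; case: ifP => _; lia.
rewrite /skey lex_lt //; rewrite (inj_eq zkey_inj).
case: eqP => // e /=; rewrite e; case: ifP => _ //; lia.
Qed.

Lemma skey_inj n (f : 'I_n -> int) : injective (skey f).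
Proof.
move=> x y e.
have s2 : forall z : 'I_n, ((if (0 <= f z)%R then nat_of_ord z else n.-1 - z) < n)%N.
  by move=> z; have := ltn_ord z; case: ifP => _; lia.
have [e1 e2] := lex_eq (s2 x) (s2 y) e.
have ef := zkey_inj e1; rewrite ef in e2.
have hx := ltn_ord x; have hy := ltn_ord y.
apply: val_inj; move: e2; case: ifP => _ /=; lia.
Qed.

Lemma tot (T : finType) (k1 k2 : T -> nat) : injective k1 -> injective k2 ->
  (forall x y, (k2 x < k2 y)%N -> (k1 x < k1 y)%N) ->
  forall x y, (k1 x < k1 y)%N = (k2 x < k2 y)%N.
Proof.
move=> i1 i2 H x y; apply/idP/idP; last exact: H.
move=> h; case: (ltngtP (k2 x) (k2 y)) => // h'.
- by have := H _ _ h'; lia.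
- by move: h; rewrite (i2 _ _ h') ltnn.
Qed.

Lemma before_inv n (s : {perm 'I_n}) x y : before (s^-1)%g x y = (s x < s y)%N.
Proof. by rewrite /before invgK. Qed.

Lemma sinj n (s : {perm 'I_n}) : injective (fun x => nat_of_ord (s x)).
Proof. by move=> x y /val_inj /perm_inj. Qed.

Lemma sort_iff n (f : 'I_n -> int) (s : {perm 'I_n}) :
  is_sortperm f (s^-1)%g <-> forall x y, (s x < s y)%N = (skey f x < skey f y)%N.
Proof.
split.
- move=> H; apply: tot; [exact: sinj | exact: skey_inj |] => x y.
  rewrite skey_lt -!before_inv => /orP [h | /andP [/eqP e]].
  + exact: (H x y).1 h.
  + case: ifP => h1 h2.
    * exact: (H x y).2.1 h2 e h1.
    * apply: (H y x).2.2 h2 (esym e) _.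
      by rewrite -e ltNge h1.
- move=> H x y; rewrite !before_inv !H !skey_lt.
  split; first by move=> h; apply/orP; left.
  split; move=> h e h1; rewrite e eqxx /=.
  + by rewrite -e h1 h orbT.
  + by rewrite -e leNgt h1 /= h orbT.
Qed.


Lemma card_zkey_lt n m (f : 'I_n -> int) k : (forall x, absz (f x) <= m)%N ->
  #|[pred x | zkey (f x) < k]%N| =
  (\sum_(l < (2 * m).+1 | l < k) #|[pred x | f x == lab l]|)%N.
Proof.
move=> hb; rewrite -sum1_card.
have hz : forall x, (zkey (f x) < (2 * m).+1)%N by move=> x; rewrite ltnS zkey_le.
rewrite (partition_big (fun x => inord (zkey (f x)) : 'I_(2 * m).+1) (fun l : 'I_(2 * m).+1 => l < k)%N).
  apply: eq_bigr => l hl; rewrite -sum1_card; apply: eq_bigl => x.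
  rewrite !inE -val_eqE /= inordK //.
  apply/andP/eqP => [[_ /eqP <-]|e]; first by rewrite lab_zkey.
  by rewrite e zkey_lab eqxx hl.
by move=> x; rewrite inE inordK.
Qed.

Lemma CL n m (A : {ffun 'I_(2 * m).+1 -> nat}) (s : {perm 'I_n}) (f : 'I_n -> int) :
  (forall x, absz (f x) <= m)%N ->
  (forall l : 'I_(2 * m).+1, #|[pred x | f x == lab l]| = A l) ->
  (forall x y, (s x < s y)%N -> (zkey (f x) <= zkey (f y))%N) ->
  forall x k, (zkey (f x) < k)%N = (s x < bstart A k)%N.
Proof.
move=> hb hc hm x k.
pose D := [pred t : 'I_n | zkey (f ((s^-1)%g t)) < k]%N.
have hD : forall u v : 'I_n, (u <= v)%N -> D v -> D u.
  move=> u v; rewrite leq_eqVlt => /orP [/eqP e | huv]; first by rewrite (val_inj e).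
  rewrite /D /=; apply: leq_trans; rewrite ltnS; apply: hm.
  by rewrite !permKV.
have := card_down hD (s x); rewrite /D /= permK => ->.
congr (_ < _)%N.
rewrite (card_perm (s^-1)%g (fun x => zkey (f x) < k)%N).
rewrite (card_zkey_lt k hb) /bstart.
by apply: eq_bigr => l _; rewrite hc.
Qed.


Lemma eq_lt a b : (forall k, (a < k)%N = (b < k)%N) -> a = b.
Proof.
move=> H; have h1 := H a.+1; have h2 := H b.+1.
rewrite ltnSn in h1; rewrite ltnSn in h2.
by apply/eqP; rewrite eqn_leq -[(a <= b)%N]ltnS -[(b <= a)%N]ltnS h2 -h1.
Qed.

Lemma lab_ge0 l : (0 <= lab l)%R = ~~ odd l.
Proof.
rewrite /lab; case: (boolP (odd l)) => ol /=.
- rewrite oppr_ge0 lez_nat leqn0; apply/negbTE.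
  by rewrite uphalf_half ol.
- by rewrite lez_nat.
Qed.

Lemma rank_perm n (s : {perm 'I_n}) x : #|[pred y | s y < s x]%N| = s x.
Proof.
rewrite (card_perm s (fun t : 'I_n => (t < s x)%N)).
by rewrite card_lt // ltnW.
Qed.

Lemma bstart_S' m (A : {ffun 'I_(2 * m).+1 -> nat}) (l : 'I_(2 * m).+1) :
  bstart A l.+1 = (bstart A l + A l)%N.
Proof. by rewrite bstart_S // inord_val. Qed.

Lemma part1 n m (A : {ffun 'I_(2 * m).+1 -> nat}) (s : {perm 'I_n}) :
  outcome A s -> exists! f : {ffun 'I_n -> int}, assoc A s f.
Proof.
move=> [hwc hl].
have Sn : bstart A (2 * m).+1 = n by rewrite bstart_ge.
have cex : forall t : 'I_n, exists k, (t < bstart A k.+1)%N.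
  by move=> t; exists (2 * m); rewrite Sn.
pose c t := ex_minn (cex t).
have Pc : forall t k, (c t < k)%N = (t < bstart A k)%N.
  move=> t k; rewrite /c; case: (ex_minnP (cex t)) => c0 h0 hmin.
  apply/idP/idP => h.
  - apply: (leq_trans h0); exact: bstart_mono.
  - rewrite ltnNge; apply/negP => hk.
    case: c0 h0 hmin hk => [|j] h0 hmin hk.
    + by move: h; rewrite leqn0 in hk; rewrite (eqP hk) bstart0.
    + have h2 : ~~ (t < bstart A j.+1)%N by apply/negP => /hmin; rewrite ltnn.
      by move: h2; rewrite (leq_trans h (bstart_mono A hk)).
have cle : forall t, (c t < (2 * m).+1)%N by move=> t; rewrite Pc Sn.
pose f := [ffun x => lab (c (s x))].
have zf : forall x, zkey (f x) = c (s x) by move=> x; rewrite ffunE zkey_lab.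
have inb : forall t (l : 'I_(2 * m).+1), c t = l -> inblock A l t.
  move=> t l e; rewrite /inblock -bstart_S'.
  by rewrite leqNgt -!Pc e ltnn ltnSn.
have cnt : forall l : 'I_(2 * m).+1, #|[pred x | f x == lab l]| = A l.
  move=> l.
  transitivity #|[pred t : 'I_n | c t == l]|.
    rewrite -(card_perm s (fun t => c t == l)); apply: eq_card => x.
    by rewrite !inE -(inj_eq zkey_inj) zf zkey_lab.
  have hl1 : (bstart A l.+1 <= n)%N by rewrite -Sn; apply: bstart_mono.
  have hl0 : (bstart A l <= bstart A l.+1)%N by apply: bstart_mono.
  have := cardID [pred t : 'I_n | t < bstart A l]%N [pred t : 'I_n | t < bstart A l.+1]%N.
  rewrite card_lt // (@eq_card _ _ [pred t : 'I_n | t < bstart A l]%N); last first.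
    move=> t; rewrite !inE; apply/andP/idP => [[]//|h]; split => //.
    exact: leq_trans h hl0.
  rewrite card_lt ?(leq_trans hl0) //.
  have hS : bstart A l.+1 = (bstart A l + A l)%N by rewrite bstart_S // inord_val.
  move=> e.
  have <- : #|[predD [pred t : 'I_n | (t < bstart A l.+1)%N] & [pred t : 'I_n | (t < bstart A l)%N]]| = A l.
    by move: e; rewrite hS => /addnI.
  apply: eq_card => t; rewrite !inE -!Pc.
  by rewrite -leqNgt ltnS -eqn_leq eq_sym.
have hb : forall x, (absz (f x) <= m)%N by move=> x; rewrite -zkey_le zf -ltnS.
exists f; split.
  split; first by split.
  split.
    move=> z; rewrite mult_eq; case: ifP => h.
      rewrite -cnt inordK // lab_zkey; by apply: eq_card.
    apply: eq_card0 => x; rewrite !inE; apply/negbTE/eqP => e.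
    by move: h; rewrite -e zf cle.
  apply/sort_iff; apply: tot; [exact: sinj | exact: skey_inj |] => x y.
  rewrite skey_lt !zf => /orP [h | /andP [/eqP e h]].
    rewrite ltnNge; apply/negP => hyx.
    have h1 : (s x < bstart A (c (s x)).+1)%N by rewrite -Pc.
    have h2 : (c (s y) < (c (s x)).+1)%N by rewrite Pc (leq_ltn_trans hyx h1).
    by move: h; rewrite ltnNge -ltnS h2.
  have ecy : c (s y) = c (s x) by rewrite -!zf e.
  pose k : 'I_(2 * m).+1 := Ordinal (cle (s x)).
  have ix := inb (s x) k erefl.
  have iy := inb (s y) k ecy.
  have nxy : x != y by apply/eqP => exy; move: h; rewrite exy ltnn; case: ifP.
  have nsxy : nat_of_ord (s x) != s y.
    by apply: contra nxy => /eqP /val_inj /perm_inj ->.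
  have fxk : f x = lab k by rewrite ffunE.
  rewrite ltn_neqAle nsxy /= leqNgt; apply/negP => hyx.
  move: h; rewrite fxk lab_ge0; case: (boolP (odd k)) => ok /= h.
    have : PA A (s x) (s y) by apply/existsP; exists k; rewrite ix iy ok.
    move/hl; rewrite /before !permK => hxy.
    by move: h; rewrite ltnNge ltnW.
  have : PA A (s y) (s x) by apply/existsP; exists k; rewrite ix iy (negbTE ok).
  move/hl; rewrite /before !permK => hxy.
  by move: h; rewrite ltnNge ltnW.
move=> f' [[_ hb'] [hc' hs']].
have cnt' : forall l : 'I_(2 * m).+1, #|[pred x | f' x == lab l]| = A l.
  by move=> l; rewrite hc' mult_lab.
have mono : forall x y, (s x < s y)%N -> (zkey (f' x) <= zkey (f' y))%N.
  move=> x y; rewrite (sort_iff f' s).1 // skey_lt => /orP [/ltnW //|/andP [/eqP -> _]] //.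
have := CL hb' cnt' mono.
move=> H; apply/ffunP => x.
rewrite ffunE -[f' x]lab_zkey; congr lab.
apply: eq_lt => k; by rewrite H Pc.
Qed.


Lemma part2 n m (f : {ffun 'I_n -> int}) : in_A (@antichain n) m f ->
  exists! As : {ffun 'I_(2 * m).+1 -> nat} * {perm 'I_n},
    outcome As.1 As.2 /\ assoc As.1 As.2 f.
Proof.
move=> hin; have hb := hin.2.
pose A : {ffun 'I_(2 * m).+1 -> nat} := [ffun l : 'I_(2 * m).+1 => #|[pred x | f x == lab l]|].
pose r x := #|[pred y | skey f y < skey f x]%N|.
have rlt : forall x, (r x < n)%N.
  move=> x; rewrite -[n]card_ord.
  apply: (@leq_ltn_trans #|predC1 x|).
    apply: subset_leq_card; apply/subsetP => y; rewrite !inE.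
    by apply: contraL => /eqP ->; rewrite ltnn.
  by rewrite cardC1 card_ord; have := ltn_ord x; move: (nat_of_ord x) => a; case: (n).
have rmono : forall x y, (skey f x < skey f y)%N -> (r x < r y)%N.
  move=> x y h.
  have hx : x \notin [pred z | skey f z < skey f x]%N by rewrite inE ltnn.
  apply: (@leq_trans #|[predU1 x & [pred z | skey f z < skey f x]%N]|).
    by rewrite cardU1 hx.
  apply: subset_leq_card; apply/subsetP => z; rewrite !inE.
  by case/orP => [/eqP -> //| hz]; apply: ltn_trans hz h.
have rinj : injective r.
  move=> x y e; apply: (@skey_inj n f); case: (ltngtP (skey f x) (skey f y)) => // h.
  - by have := rmono _ _ h; rewrite e ltnn.
  - by have := rmono _ _ h; rewrite e ltnn.
pose r2 := fun x => (Ordinal (rlt x) : 'I_n).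
have rinj2 : injective r2.
  move=> a b; rewrite /r2 => hab; apply: rinj; exact: (congr1 val hab).
pose s := perm rinj2.
have hs : forall x y, (s x < s y)%N = (skey f x < skey f y)%N.
  apply: tot; [exact: sinj | exact: skey_inj |] => x y h.
  by rewrite !permE /=; apply: rmono.
have hbz : forall x, (zkey (f x) < (2 * m).+1)%N by move=> x; rewrite ltnS zkey_le.
have cnt : forall l : 'I_(2 * m).+1, #|[pred x | f x == lab l]| = A l.
  by move=> l; rewrite ffunE.
have mono : forall x y, (s x < s y)%N -> (zkey (f x) <= zkey (f y))%N.
  move=> x y; rewrite hs skey_lt => /orP [/ltnW //|/andP [/eqP -> _]] //.
have H := CL hb cnt mono.
exists (A, s); split.
  split; split => /=.
  - rewrite /weak_comp.
    have := card_zkey_lt (2 * m).+1 hb.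
    rewrite (@eq_card _ _ predT); last by move=> x; rewrite !inE hbz.
    rewrite card_ord => ->.
    by apply: eq_big => l; rewrite ?ltn_ord ?ffunE.
  - move=> i j /existsP [k /and3P [ik jk hij]].
    rewrite /before.
    set x := (s^-1)%g i; set y := (s^-1)%g j.
    have ei : s x = i by rewrite permKV.
    have ej : s y = j by rewrite permKV.
    have zk : forall z, inblock A k (s z) -> f z = lab k.
      move=> z; rewrite /inblock -bstart_S' => /andP [h1 h2].
      rewrite -[f z]lab_zkey; congr lab; apply: eq_lt => q.
      rewrite H; case: (ltnP k q) => hq.
        by apply: (leq_trans h2); apply: bstart_mono.
      by apply/negbTE; rewrite -leqNgt; apply: leq_trans (bstart_mono A hq) h1.
    have fx : f x = lab k by apply: zk; rewrite ei.
    have fy : f y = lab k by apply: zk; rewrite ej.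
    case: ifP hij => ok; rewrite -ei -ej hs skey_lt fx fy ltnn eqxx lab_ge0 ok //=.
  - exact: hin.
  - split.
      move=> z; rewrite mult_eq; case: ifP => h.
        by rewrite ffunE inordK // lab_zkey.
      apply: eq_card0 => x; rewrite !inE; apply/negbTE/eqP => e.
      by move: h; rewrite -e hbz.
    by apply/sort_iff; exact: hs.
move=> [A' s'] /= [[hwc' hl'] [_ [hc' hs']]].
have eA : A' = A by apply/ffunP => l; rewrite ffunE hc' mult_lab.
have es : s' = s.
  apply/permP => x; apply: val_inj.
  transitivity #|[pred y | s' y < s' x]%N|; first by rewrite rank_perm.
  transitivity #|[pred y | s y < s x]%N|; last by rewrite rank_perm.
  by apply: eq_card => y; rewrite !inE ((sort_iff f s').1 hs') hs.
by rewrite eA es.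
Qed.

Theorem proposition2p7 (n m : nat) (hn : (0 < n)%N) (hm : (0 < m)%N) :
  (* well defined: each outcome has exactly one associated f *)
  (forall (A : {ffun 'I_(2 * m).+1 -> nat}) (s : {perm 'I_n}),
      outcome A s -> exists! f : {ffun 'I_n -> int}, assoc A s f) /\
  (* bijective onto A([n]; m) *)
  (forall f : {ffun 'I_n -> int}, in_A (@antichain n) m f ->
      exists! As : {ffun 'I_(2 * m).+1 -> nat} * {perm 'I_n},
        outcome As.1 As.2 /\ assoc As.1 As.2 f).
Proof.
split; [exact: part1 | exact: part2].
Qed.
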